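(* Let $n\ge0$ and let $\mathcal V$ be a variety with $n+2$ Gumm terms. For every integer $q\ge1$, with $k=(2^{q+1}-2)n$, $\mathcal V$ satisfies $$\alpha(\beta\circ_{2^q+1}\gamma)\subseteq\alpha(\gamma\circ\beta)\circ(\alpha\gamma\circ_k\alpha\beta)\quad\text{and}\quad\alpha(\beta\circ_{2^q+1}\gamma)\subseteq(\alpha\beta\circ_k\alpha\gamma)\circ\alpha(\beta\circ\gamma).$$
   Context: Here $\alpha,\beta,\gamma$ range over congruences of algebras in $\mathcal V$. $\circ$ is relational composition, juxtaposition is intersection. For relations $X,Y$ and $m\ge1$, $X\circ_m Y$ denotes $X\circ Y\circ X\circ\cdots$ with $m$ factors; $X\circ_0Y$ is the identity relation. A variety has $n+2$ Gumm terms if it has ternary terms $p,j_1,\dots,j_{n+1}$ satisfying: $x=j_i(x,y,x)$ for all $i$; $x=p(x,z,z)$; $p(x,x,z)=j_1(x,x,z)$; $j_i(x,z,z)=j_{i+1}(x,z,z)$ for odd $i\le n$; $j_i(x,x,z)=j_{i+1}(x,x,z)$ for even $i\le n$; $j_{n+1}(x,y,z)=z$. *)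

(* Defs.v *)
From mathcomp Require Import all_boot.
Set Implicit Arguments. Unset Strict Implicit. Unset Printing Implicit Defensive.

Record signature := Signature { op_sym :> Type; arity : op_sym -> nat }.

Inductive term (s : signature) (X : Type) : Type :=
| Var : X -> term s X
| App : forall o : s, ('I_(arity o) -> term s X) -> term s X.
Arguments Var {s X} _.
Arguments App {s X} _ _.

Record algebra (s : signature) := Algebra {
  carrier :> Type;
  interp : forall o : s, ('I_(arity o) -> carrier) -> carrier }.

Fixpoint eval (s : signature) (A : algebra s) (X : Type) (env : X -> A)
    (t : term s X) : A :=
  match t with
  | Var x => env x
  | App o args => @interp s A o (fun i => eval env (args i))
  end.

Definition identity (s : signature) := (term s nat * term s nat)%type.
Definition satisfies (s : signature) (A : algebra s) (e : identity s) : Prop :=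
  forall env : nat -> A, eval env e.1 = eval env e.2.

(** A variety is presented by a set of identities [Sigma] (Birkhoff);
    its members are the models of [Sigma]. *)
Definition in_variety (s : signature) (Sigma : identity s -> Prop)
    (A : algebra s) : Prop :=
  forall e, Sigma e -> satisfies A e.

Definition term3 (s : signature) := term s 'I_3.

Definition top3 (s : signature) (A : algebra s) (t : term3 s) (a b c : A) : A :=
  eval (fun i : 'I_3 => match val i with 0 => a | 1 => b | _ => c end) t.

Definition gumm_identities (s : signature) (A : algebra s) (n : nat)
    (p : term3 s) (j : nat -> term3 s) : Prop :=
  (forall i, 1 <= i <= n.+1 -> forall x y : A, top3 (j i) x y x = x) /\
  (forall x z : A, top3 p x z z = x) /\
  (forall x z : A, top3 p x x z = top3 (j 1) x x z) /\
  (forall i, 1 <= i <= n -> odd i ->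
     forall x z : A, top3 (j i) x z z = top3 (j i.+1) x z z) /\
  (forall i, 1 <= i <= n -> ~~ odd i ->
     forall x z : A, top3 (j i) x x z = top3 (j i.+1) x x z) /\
  (forall x y z : A, top3 (j n.+1) x y z = z).

Definition has_gumm_terms (s : signature) (Sigma : identity s -> Prop)
    (n : nat) : Prop :=
  exists (p : term3 s) (j : nat -> term3 s),
    forall A : algebra s, in_variety Sigma A -> gumm_identities A n p j.

Definition relation (T : Type) := T -> T -> Prop.

Definition rcomp (T : Type) (X Y : relation T) : relation T :=
  fun a c => exists b, X a b /\ Y b c.

Definition rint (T : Type) (X Y : relation T) : relation T :=
  fun a b => X a b /\ Y a b.

Definition rsub (T : Type) (X Y : relation T) : Prop :=
  forall a b, X a b -> Y a b.

(** [rcompn X Y m] = X o Y o X o ... with m factors; m = 0 gives identity. *)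
Fixpoint rcompn (T : Type) (X Y : relation T) (m : nat) : relation T :=
  match m with
  | 0 => fun a b => a = b
  | 1 => X
  | m'.+1 => rcomp X (rcompn Y X m')
  end.

Definition is_congruence (s : signature) (A : algebra s) (R : relation A) : Prop :=
  [/\ (forall a, R a a),
      (forall a b, R a b -> R b a),
      (forall a b c, R a b -> R b c -> R a c) &
      (forall (o : s) (u v : 'I_(arity o) -> A),
         (forall i, R (u i) (v i)) -> R (@interp s A o u) (@interp s A o v))].

(* Main.v *)
Require Import Defs.
From mathcomp Require Import all_boot.
From mathcomp Require Import zify.
Set Implicit Arguments. Unset Strict Implicit. Unset Printing Implicit Defensive.

Definition st (T : Type) (X Y : relation T) (i : nat) : relation T :=
  if odd i then Y else X.

Definition chain (T : Type) (R : nat -> relation T) (m : nat) (a b : T) :=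
  exists x : nat -> T, x 0 = a /\ x m = b /\ forall i, i < m -> R i (x i) (x i.+1).

Lemma st_swap T (X Y : relation T) i : st Y X i = st X Y i.+1.
Proof. by rewrite /st /=; case: (odd i). Qed.

Lemma rcompn_chain T (X Y : relation T) m a b :
  rcompn X Y m a b <-> chain (st X Y) m a b.
Proof.
elim: m X Y a b => [|m IH] X Y a b.
  split=> [->|[x [x0 [xm _]]]]; last by rewrite -x0 -xm.
  by exists (fun _ => b).
case: m IH => [|m] IH.
  split=> [H|[x [x0 [x1 H]]]].
    exists (fun i => if i is 0 then a else b); split=> //; split=> // i.
    by case: i.
  by have := H 0 isT; rewrite x0 x1.
change (rcomp X (rcompn Y X m.+1) a b <-> chain (st X Y) m.+2 a b).
split.
  move=> [c [Hac /IH [x [x0 [xm Hx]]]]].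
  exists (fun i => if i is i'.+1 then x i' else a); split=> //; split=> //.
  case=> [|i] Hi /=; first by rewrite /st /= x0.
  by rewrite -st_swap; apply: Hx.
move=> [x [x0 [xm Hx]]].
exists (x 1); split; first by have := Hx 0 isT; rewrite x0.
apply/IH; exists (fun i => x i.+1); split=> //; split=> // i Hi.
by rewrite st_swap; apply: Hx.
Qed.

Lemma chain_ext T (R R' : nat -> relation T) m a b :
  (forall i u v, i < m -> R i u v -> R' i u v) -> chain R m a b -> chain R' m a b.
Proof.
move=> H [x [x0 [xm Hx]]]; exists x; split=> //; split=> // i Hi.
by apply: H => //; apply: Hx.
Qed.

Lemma chain_cat T (X Y : relation T) m1 m2 a b c :
  ~~ odd m1 -> chain (st X Y) m1 a b -> chain (st X Y) m2 b c ->
  chain (st X Y) (m1 + m2) a c.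
Proof.
move=> ev [x [x0 [xm Hx]]] [y [y0 [ym Hy]]].
exists (fun i => if i <= m1 then x i else y (i - m1)); split=> //.
split.
  case: (leqP (m1 + m2) m1) => H.
    have m20 : m2 = 0 by lia.
    by rewrite m20 addn0 -ym m20 y0 -xm.
  by rewrite addKn.
move=> i Hi; case: (ltnP i m1) => Him.
  have h1 : (i <= m1) = true by apply: ltnW.
  have h2 : (i.+1 <= m1) = true := Him.
  rewrite h1 ?h2; exact: Hx.

have -> : st X Y i = st X Y (i - m1).
  by rewrite /st oddB // (negbTE ev) addbF.
case: (eqVneq i m1) => [E|ne].
  rewrite E leqnn subnn subSn // subnn xm -y0.
  apply: Hy; lia.
have Hl : (i <= m1) = false by apply/negbTE; rewrite -ltnNge ltn_neqAle eq_sym ne.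
rewrite Hl subSn //; apply: Hy; lia.
Qed.

Lemma eval_cong (s : signature) (A : algebra s) (R : relation A) :
  is_congruence R -> forall (X : Type) (e1 e2 : X -> A),
  (forall x, R (e1 x) (e2 x)) -> forall t, R (eval e1 t) (eval e2 t).
Proof.
move=> [_ _ _ Hc] X e1 e2 He; elim=> [x|o args IH] /=; first exact: He.
by apply: Hc.
Qed.

Lemma top3_cong (s : signature) (A : algebra s) (R : relation A) (t : term3 s)
  (a a' b b' c c' : A) :
  is_congruence R -> R a a' -> R b b' -> R c c' ->
  R (top3 t a b c) (top3 t a' b' c').
Proof.
move=> C Ha Hb Hc; apply: (eval_cong C) => -[[|[|k]] Hk] //=.
Qed.

Lemma st_cong (s : signature) (A : algebra s) (X Y : relation A) i :
  is_congruence X -> is_congruence Y -> is_congruence (st X Y i).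
Proof. by rewrite /st; case: (odd i). Qed.

Lemma rint_cong_sym (T : Type) (R S : relation T) a b :
  (forall u v, R u v -> R v u) -> (forall u v, S u v -> S v u) ->
  rint R S a b -> rint R S b a.
Proof. by move=> HR HS [h1 h2]; split; [apply: HR|apply: HS]. Qed.

Lemma st_par T (X Y : relation T) i i' : odd i = odd i' -> st X Y i = st X Y i'.
Proof. by rewrite /st => ->. Qed.

Lemma st_rint T (X Y Z : relation T) i : st (rint X Y) (rint X Z) i = rint X (st Y Z i).
Proof. by rewrite /st; case: (odd i). Qed.

Lemma core (s : signature) (A : algebra s) (n : nat) (p : term3 s) (j : nat -> term3 s)
  (G : gumm_identities A n p j) (alpha beta gamma : relation A)
  (Ca : is_congruence alpha) (Cb : is_congruence beta) (Cc : is_congruence gamma)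
  (t : nat) (ht : 2 <= t) (x : nat -> A)
  (Hx : forall i, i < (2*t).-1 -> st beta gamma i (x i) (x i.+1))
  (Had : alpha (x 0) (x (2*t).-1)) :
  exists f, alpha (x 0) f /\ chain (fun s => st beta gamma (t.-1 - s)) t (x 0) f /\
     chain (st (rint alpha gamma) (rint alpha beta)) ((2*t-2)*n) f (x (2*t).-1).
Proof.
move: G => [Gj [Gp1 [Gp2 [Godd [Gev Glast]]]]].
have stC : forall i, is_congruence (st beta gamma i) by move=> i; apply: st_cong.
have stSym : forall i u v, st beta gamma i u v -> st beta gamma i v u.
  by move=> i u v; case: (stC i) => _ H _ _; apply: H.
have stRefl : forall i u, st beta gamma i u u by move=> i u; case: (stC i).
have stTr : forall i u v w, st beta gamma i u v -> st beta gamma i v w ->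
    st beta gamma i u w by move=> i u v w; case: (stC i) => _ _ H _; apply: H.
have [aRefl aSym aTr _] := Ca.
have step : forall i k l, i < (2*t).-1 ->
    ((k = i /\ l = i.+1) \/ (k = i.+1 /\ l = i)) -> st beta gamma i (x k) (x l).
  move=> i k l Hi [[-> ->]|[-> ->]]; first exact: Hx.
  by apply: stSym; apply: Hx.
set a := x 0; set d := x (2*t).-1.
have Jal : forall i y, 1 <= i <= n.+1 -> alpha (top3 (j i) a y d) a.
  move=> i y Hi; rewrite -{2}(Gj i Hi a y).
  by apply: top3_cong; first exact: Ca; try apply: aRefl; apply: aSym.
pose f := top3 (j 1) a (x 1) d.
exists f; split; first by apply: aSym; apply: Jal.
split.
  pose g s := if s == 0 then a else if s < t then top3 p a (x (t - s)) (x (t + s).-1)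
              else f.
  exists g; split => //; split; first by rewrite /g ltnn (_ : (t == 0) = false) //; lia.
  move=> i Hi; rewrite /g.
  case: (eqVneq i 0) => [->|i0] /=.
    have -> : 1 < t by [].
    rewrite -{1}(Gp1 a (x t)) subn0.
    apply: top3_cong => //; first by apply: step; [|right; split]; lia.
    by rewrite addn1.
  rewrite Hi; case: (ltnP i.+1 t) => Hit.
    apply: top3_cong => //.
      by rewrite subnS; apply: step; [|right; split]; lia.
    rewrite (st_par _ _ (_ : odd (t.-1 - i) = odd (t + i).-1)); last by lia.
    by apply: step; [|left; split]; lia.
  have ti : t = i.+1 by lia.
  have -> : t.-1 - i = 0 by lia.
  apply: (stTr _ _ (top3 p a a d)).
    apply: top3_cong => //.
      by apply: step; [|right; split]; lia.
    have -> : d = x (t + i) by rewrite /d; congr x; lia.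
    rewrite (st_par _ _ (_ : odd 0 = odd (t + i).-1)); last by lia.
    by apply: step; [|left; split]; lia.
  rewrite Gp2; apply: top3_cong => //.
  by apply: step; [|left; split]; lia.
pose L := 2*t - 2.
pose E i := top3 (j i) a (x (if odd i then 1 else L)) d.
have block : forall i, 1 <= i <= n -> chain (st (rint alpha gamma) (rint alpha beta)) L (E i) (E i.+1).
  move=> i Hi.
  pose mid u := if odd i then u.+1 else L - u.
  pose y u := if u < L then top3 (j i) a (x (mid u)) d else E i.+1.
  have yal : forall u, alpha (y u) a.
    move=> u; rewrite /y; case: (u < L); first by apply: Jal; lia.
    by rewrite /E; apply: Jal; lia.
  exists y; split.
    rewrite /y /mid /E (_ : 0 < L); last by rewrite /L; lia.
    by rewrite subn0.
  split; first by rewrite /y ltnn.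
  move=> u Hu; rewrite st_rint; split.
    by apply: (aTr _ a); [apply: yal|apply: aSym; apply: yal].
  rewrite st_swap /y Hu.
  case: (ltnP u.+1 L) => HuL.
    apply: top3_cong => //; rewrite /mid; case: (boolP (odd i)) => oi.
      by apply: step; [|left; split]; rewrite /L; lia.
    rewrite (st_par _ _ (_ : odd u.+1 = odd (L - u.+1))); last by rewrite /L; lia.
    by apply: step; [|right; split]; rewrite /L; lia.
  have uL : u = L.-1 by lia.
  rewrite (st_par _ _ (_ : odd u.+1 = odd 0)); last by rewrite /L; lia.
  rewrite /E /mid /=; case: (boolP (odd i)) => oi /=.
    apply: (stTr _ _ (top3 (j i.+1) a d d)).
      rewrite -(Godd i _ oi); last by lia.
      apply: top3_cong => //.
      rewrite (st_par _ _ (_ : odd 0 = odd L)); last by rewrite /L; lia.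
      have -> : d = x L.+1 by rewrite /d /L; congr x; lia.
      by apply: step; [|left; split]; rewrite /L; lia.
    apply: top3_cong => //.
    rewrite (st_par _ _ (_ : odd 0 = odd L)); last by rewrite /L; lia.
    have -> : d = x L.+1 by rewrite /d /L; congr x; lia.
    by apply: step; [|right; split]; rewrite /L; lia.
  apply: (stTr _ _ (top3 (j i.+1) a a d)).
    rewrite -(Gev i _ oi); last by lia.
    apply: top3_cong => //; rewrite (_ : L - u = 1); last by lia.
    by apply: step; [|right; split]; rewrite /L; lia.
  apply: top3_cong => //.
  by apply: step; [|left; split]; rewrite /L; lia.
have tl : forall i, 1 <= i <= n.+1 ->
    chain (st (rint alpha gamma) (rint alpha beta)) ((i.-1) * L) f (E i).
  elim=> [|i IH] Hi; first by lia.
  case: (eqVneq i 0) => [->|i0].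
    by exists (fun _ => f); split=> //; split=> //; rewrite /E /=.
  have -> : (i.+1.-1 * L) = i.-1 * L + L by rewrite /=; case: i i0 {IH Hi} => // i _; rewrite mulSn addnC.
  apply: chain_cat.
  - by rewrite oddM /L; apply/nandP; right; lia.
  - by apply: IH; lia.
  - by apply: block; lia.
have := tl n.+1; rewrite /= mulnC /E Glast; apply; lia.
Qed.

Lemma chain_rev T (R R' : nat -> relation T) m a b :
  chain R m a b -> (forall i u v, i < m -> R (m.-1 - i) u v -> R' i v u) ->
  chain R' m b a.
Proof.
move=> [x [x0 [xm Hx]]] H; exists (fun i => x (m - i)); split; first by rewrite subn0.
split; first by rewrite subnn.
move=> i Hi; apply: H => //.
have -> : m - i.+1 = m.-1 - i by lia.
have -> : m - i = (m.-1 - i).+1 by lia.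
apply: Hx; lia.
Qed.

Lemma main1 (s : signature) (A : algebra s) (n : nat) (p : term3 s) (j : nat -> term3 s)
  (G : gumm_identities A n p j) (alpha beta gamma : relation A)
  (Ca : is_congruence alpha) (Cb : is_congruence beta) (Cc : is_congruence gamma) :
  forall q, 1 <= q ->
    rsub (rint alpha (rcompn beta gamma (2 ^ q).+1))
         (rcomp (rint alpha (rcomp gamma beta))
                (rcompn (rint alpha gamma) (rint alpha beta) ((2 ^ q.+1 - 2) * n))).
Proof.
elim=> [//|q IH] _ a d [Had /rcompn_chain [x [x0 [xm Hx]]]].
have e2 : 2 ^ q.+1 = 2 * 2 ^ q by rewrite expnS.
have e3 : 2 ^ q.+2 = 2 * 2 ^ q.+1 by rewrite expnS.
have pos : 0 < 2 ^ q by rewrite expn_gt0.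
pose t := (2 ^ q).+1.
have ht : 2 <= t by rewrite /t ltnS.
have em : (2 * t).-1 = (2 ^ q.+1).+1 by rewrite /t; lia.
have [f [Haf [Hh Ht]]] := core G Ca Cb Cc ht (x := x)
   (ltac:(by rewrite em)) (ltac:(by rewrite em x0 xm)).
rewrite x0 em xm in Hh Ht Haf.
case: (eqVneq q 0) => [q0|q0].
  subst q; move: Hh => [y [y0 [y2 Hy]]].
  exists f; split.
    split => //; exists (y 1); split.
      by have := Hy 0 isT; rewrite y0.
    by have := Hy 1 isT; rewrite y2.
  by apply/rcompn_chain; move: Ht; rewrite /t.
have Hh' : rint alpha (rcompn beta gamma (2 ^ q).+1) a f.
  split => //; apply/rcompn_chain; apply: chain_ext Hh => i u v Hi.
  rewrite (st_par _ _ (_ : odd (t.-1 - i) = odd i)) // /t.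
  have ev : ~~ odd (2 ^ q) by rewrite oddX negb_or q0.
  rewrite /= oddB; last by lia.
  by rewrite (negbTE ev).
have [g [Hag /rcompn_chain Hgf]] := IH (ltac:(lia)) a f Hh'.
exists g; split => //; apply/rcompn_chain.
have -> : (2 ^ q.+2 - 2) * n = (2 ^ q.+1 - 2) * n + (2 * t - 2) * n.
  by rewrite -mulnDl; congr (_ * n); rewrite /t; lia.
apply: chain_cat Hgf Ht.
by rewrite oddM negb_and; apply/orP; left; rewrite e2; lia.
Qed.

Theorem theorem4p7 (s : signature) (Sigma : identity s -> Prop) (n : nat) :
  has_gumm_terms Sigma n ->
  forall q : nat, 1 <= q ->
  forall (A : algebra s), in_variety Sigma A ->
  forall alpha beta gamma : relation A,
    is_congruence alpha -> is_congruence beta -> is_congruence gamma ->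
    let k := ((2 ^ q.+1 - 2) * n)%N in
    rsub (rint alpha (rcompn beta gamma (2 ^ q).+1))
         (rcomp (rint alpha (rcomp gamma beta))
                (rcompn (rint alpha gamma) (rint alpha beta) k)) /\
    rsub (rint alpha (rcompn beta gamma (2 ^ q).+1))
         (rcomp (rcompn (rint alpha beta) (rint alpha gamma) k)
                (rint alpha (rcomp beta gamma))).
Proof.
move=> [p [j HG]] q hq A HA alpha beta gamma Ca Cb Cc k.
have G := HG A HA.
have M1 := main1 G Ca Cb Cc hq.
have [aR aS aT _] := Ca; have [bR bS bT _] := Cb; have [cR cS cT _] := Cc.
split; first exact: M1.
move=> a d [Had Hch].
have ev : ~~ odd (2 ^ q) by rewrite oddX negb_or; apply/andP; split => //; lia.
have Hda : rint alpha (rcompn beta gamma (2 ^ q).+1) d a.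
  split; first exact: aS.
  apply/rcompn_chain; apply: (chain_rev (R := st beta gamma)); first exact/rcompn_chain.
  move=> i u v Hi; rewrite /=.
  rewrite (st_par _ _ (_ : odd (2 ^ q - i) = odd i)); last first.
    by rewrite oddB ?(negbTE ev) //; lia.
  by rewrite /st; case: (odd i); [apply: cS|apply: bS].
have [g [[Hdg [e [Hde Heg]]] /rcompn_chain Hga]] := M1 _ _ Hda.
exists g; split.
  apply/rcompn_chain; apply: (chain_rev Hga) => i u v Hi.
  have evk : ~~ odd k by rewrite /k oddM negb_and; apply/orP; left;
    rewrite expnS; lia.
  have Hi' : i < k by [].
  rewrite (st_par _ _ (_ : odd (k.-1 - i) = odd i.+1)); last by lia.
  rewrite /st /=; case: (odd i) => /= -[h1 h2]; split; by [apply: aS|apply: bS|apply: cS].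
split; first by apply: aS.
by exists e; split; [apply: bS|apply: cS].
Qed.
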